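(* Let $r,s$, $Q\subseteq[r]\times[s]$, homogeneous ideals $I\subseteq\mathbb{K}[x_1,\dots,x_r]$, $J\subseteq\mathbb{K}[y_1,\dots,y_s]$, and Gröbner bases $F$ of $I$ with respect to $\omega_1$ and $G$ of $J$ with respect to $\omega_2$ be given, such that every element of $F$ (resp. $G$) is weakly $Q$-homogeneous with respect to $\omega_1$ (resp. $\omega_2$). Let $\omega$ be a weight vector on $\mathbb{K}[z_{jk}:(j,k)\in Q]$ such that $H_Q$ is a Gröbner basis of $I_Q$ with respect to $\omega$. Then there exists $\epsilon>0$ such that $\operatorname{Lift}(F)\cup\operatorname{Lift}(G)\cup H_Q$ is a Gröbner basis of $I\times_QJ$ with respect to the weight $\omega'=(\omega_1,\omega_2)^TB_Q+\epsilon\omega$.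
   Context: $\phi_Q:\mathbb{K}[z_{jk}:(j,k)\in Q]\to\mathbb{K}[x,y]$ is $z_{jk}\mapsto x_jy_k$, $I_Q=\ker\phi_Q$, $B_Q$ is the $(r+s)\times\#Q$ matrix of exponent vectors of $\phi_Q$, and $I\times_QJ:=\phi_Q^{-1}(I+J)$. $G_Q$ is the bipartite graph on disjoint vertex sets $[r]$, $[s]$ with edge set $Q$; $H_Q$ is the set of binomials $\prod_{i=1}^\ell z_{j_ik_i}-\prod_{i=1}^\ell z_{j_{i+1}k_i}$ (indices mod $\ell$) for the induced cycles $j_1-k_1-\cdots-j_\ell-k_\ell-j_1$ of $G_Q$. Weak $Q$-homogeneity: a polynomial $f\in\mathbb{K}[x]$ homogeneous of total degree $d$ with $\omega_1$-leading monomial $x_{j_1}\cdots x_{j_d}$ is weakly $Q$-homogeneous w.r.t. $\omega_1$ if for every monomial $x_{j'_1}\cdots x_{j'_d}$ of $f$ there is a permutation $\sigma$ of $[d]$ with $\{(k_\ell)\in[s]^d:(j_\ell,k_\ell)\in Q\ \forall\ell\}\subseteq\{(k_\ell)\in[s]^d:(j'_{\sigma(\ell)},k_\ell)\in Q\ \forall\ell\}$; for $\mathbb{K}[y]$ swap the roles of the coordinates of $Q$. Lifts: write $f=\sum_\ell c_\ell x_{j_{\ell,1}}\cdots x_{j_{\ell,d}}$ with leading monomial $x_{j_{*,1}}\cdots x_{j_{*,d}}$ and monomials ordered so that $(j_{*,i},k_i)\in Q\ \forall i$ implies $(j_{\ell,i},k_i)\in Q\ \forall i,\ell$; for each $k\in[s]^d$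 with $(j_{*,i},k_i)\in Q$ for all $i$, $f_k=\sum_\ell c_\ell z_{j_{\ell,1}k_1}\cdots z_{j_{\ell,d}k_d}$; $\operatorname{Lift}(f)$ is the set of these and $\operatorname{Lift}(F)=\bigcup_{f\in F}\operatorname{Lift}(f)$; symmetrically for $\mathbb{K}[y]$. *)

(* Defs.v *)
From HB Require Import structures.
From mathcomp Require Import all_boot all_order all_algebra all_fingroup.
From mathcomp Require Import mpoly.

Set Implicit Arguments.
Unset Strict Implicit.
Unset Printing Implicit Defensive.

Import Order.TTheory GRing.Theory Num.Theory.
Local Open Scope ring_scope.

Section Defs.
Variables (K : fieldType) (R : realFieldType).

Definition ideal_gen n (S : {mpoly K[n]} -> Prop) : {mpoly K[n]} -> Prop :=
  fun p => exists l : seq ({mpoly K[n]} * {mpoly K[n]}),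
    (forall q, q \in l -> S q.2) /\ p = \sum_(q <- l) q.1 * q.2.

Definition homog_ideal n (I : {mpoly K[n]} -> Prop) : Prop :=
  exists S : {mpoly K[n]} -> Prop,
    (forall p, S p -> exists d : nat, p \is d.-homog) /\
    (forall p, I p <-> ideal_gen S p).

Definition mweight n (w : 'I_n -> R) (m : 'X_{1..n}) : R :=
  \sum_(i < n) w i * (m i)%:R.

Definition in_w n (w : 'I_n -> R) (f : {mpoly K[n]}) : {mpoly K[n]} :=
  \sum_(m <- msupp f | all (fun m' => mweight w m' <= mweight w m) (msupp f))
     f@_m *: 'X_[m].

Definition init_ideal n (w : 'I_n -> R) (I : {mpoly K[n]} -> Prop) :=
  ideal_gen (fun q => exists f, I f /\ q = in_w w f).

Definition groebner_basis n (w : 'I_n -> R) (G I : {mpoly K[n]} -> Prop) :=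
  (forall g, G g -> I g) /\
  (forall p, init_ideal w I p <->
             ideal_gen (fun q => exists g, G g /\ q = in_w w g) p).

Definition lead_mono n (w : 'I_n -> R) (f : {mpoly K[n]}) (m0 : 'X_{1..n}) :=
  m0 \in msupp f /\
  forall m, m \in msupp f -> m != m0 -> mweight w m < mweight w m0.

(* t = [:: j_1; ...; j_d] lists the variables of m with multiplicity,
   i.e. m = x_{j_1} ... x_{j_d} *)
Definition repr_mono n (m : 'X_{1..n}) (t : seq 'I_n) :=
  forall i, m i = count_mem i t.

(* ---------- weak Q-homogeneity (generic side) ----------
   adj j k  means "(j,k) in Q" (with coordinates swapped for the y-side). *)
Definition weakly_Q_homog n p (adj : 'I_n -> 'I_p -> bool)
    (w : 'I_n -> R) (f : {mpoly K[n]}) :=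
  exists (d : nat) (m0 : 'X_{1..n}),
    f \is d.-homog /\ lead_mono w f m0 /\
    forall t0, repr_mono m0 t0 ->
    forall m, m \in msupp f -> forall t, repr_mono m t ->
      exists t', perm_eq t t' /\
        forall k : seq 'I_p, all2 adj t0 k -> all2 adj t' k.

(* ---------- lifts (generic side) ----------
   ord m is the chosen ordering x_{j_1}...x_{j_d} of the monomial m of f;
   it must satisfy the compatibility condition of the definition of Lift. *)
Definition valid_order n p (adj : 'I_n -> 'I_p -> bool) (w : 'I_n -> R)
    (f : {mpoly K[n]}) (ord : 'X_{1..n} -> seq 'I_n) :=
  forall m0, lead_mono w f m0 ->
    (forall m, m \in msupp f -> repr_mono m (ord m)) /\
    (forall k : seq 'I_p, all2 adj (ord m0) k ->
       forall m, m \in msupp f -> all2 adj (ord m) k).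

Definition lift_elem n p N (zv : 'I_n -> 'I_p -> {mpoly K[N]})
    (f : {mpoly K[n]}) (ord : 'X_{1..n} -> seq 'I_n) (k : seq 'I_p)
    : {mpoly K[N]} :=
  \sum_(m <- msupp f) f@_m *: \prod_(jk <- zip (ord m) k) zv jk.1 jk.2.

Definition Lift n p N (adj : 'I_n -> 'I_p -> bool)
    (zv : 'I_n -> 'I_p -> {mpoly K[N]}) (w : 'I_n -> R)
    (f : {mpoly K[n]}) (ord : 'X_{1..n} -> seq 'I_n) : {mpoly K[N]} -> Prop :=
  fun h => exists m0 (k : seq 'I_p),
    lead_mono w f m0 /\ all2 adj (ord m0) k /\ h = lift_elem zv f ord k.

End Defs.

Section Toric.
Variables (K : fieldType) (R : realFieldType) (r s : nat)
          (Q : {set 'I_r * 'I_s}).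

(* the variables z_{jk}, (j,k) in Q, are indexed by 'I_#|Q| via enum_val *)
Definition zpair (i : 'I_#|Q|) : 'I_r * 'I_s := enum_val i.

(* the variable z_{jk} (only meaningful for (j,k) in Q; 0 otherwise) *)
Definition zvar (j : 'I_r) (k : 'I_s) : {mpoly K[#|Q|]} :=
  if [pick i : 'I_#|Q| | zpair i == (j, k)] is Some i then 'X_i else 0.

(* K[x,y] = K[X_0..X_{r+s-1}], x_j = X_j, y_k = X_{r+k} *)
Definition xvar (j : 'I_r) : {mpoly K[r + s]} := 'X_(lshift s j).
Definition yvar (k : 'I_s) : {mpoly K[r + s]} := 'X_(rshift r k).

Definition incl_x (f : {mpoly K[r]}) : {mpoly K[r + s]} :=
  f \mPo [tuple xvar i | i < r].
Definition incl_y (g : {mpoly K[s]}) : {mpoly K[r + s]} :=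
  g \mPo [tuple yvar i | i < s].

Definition phiQ (p : {mpoly K[#|Q|]}) : {mpoly K[r + s]} :=
  p \mPo [tuple xvar (zpair i).1 * yvar (zpair i).2 | i < #|Q|].

Definition IQ : {mpoly K[#|Q|]} -> Prop := fun p => phiQ p = 0.

Definition sum_ideal (I : {mpoly K[r]} -> Prop) (J : {mpoly K[s]} -> Prop) :=
  ideal_gen (fun q => (exists f, I f /\ q = incl_x f) \/
                      (exists g, J g /\ q = incl_y g)).

Definition fiber_prod (I : {mpoly K[r]} -> Prop) (J : {mpoly K[s]} -> Prop)
  : {mpoly K[#|Q|]} -> Prop := fun p => sum_ideal I J (phiQ p).

(* H_Q: binomials of the induced cycles j_1-k_1-...-j_l-k_l-j_1 of G_Q
   (l >= 2, distinct vertices, indices mod l via ordS). *)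
Definition HQ : {mpoly K[#|Q|]} -> Prop :=
  fun h => exists (l : nat) (j : 'I_l -> 'I_r) (k : 'I_l -> 'I_s),
    [/\ (1 < l)%N, injective j, injective k,
        (forall a, (j a, k a) \in Q /\ (j (ordS a), k a) \in Q) &
      [/\
        (* induced: the only edges among cycle vertices are cycle edges *)
        (forall a b, (j a, k b) \in Q -> a = b \/ a = ordS b) &
        h = \prod_(a < l) zvar (j a) (k a)
            - \prod_(a < l) zvar (j (ordS a)) (k a)]].

Definition adjx (j : 'I_r) (k : 'I_s) : bool := (j, k) \in Q.
Definition adjy (k : 'I_s) (j : 'I_r) : bool := (j, k) \in Q.
Definition zvar_y (k : 'I_s) (j : 'I_r) : {mpoly K[#|Q|]} := zvar j k.

(* omega' = (omega_1, omega_2)^T B_Q + eps * omega : the column of B_Q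
   indexed by z_{jk} is e_j + e_{r+k}. *)
Definition omega' (w1 : 'I_r -> R) (w2 : 'I_s -> R) (eps : R)
  (w : 'I_#|Q| -> R) : 'I_#|Q| -> R :=
  fun i => w1 (zpair i).1 + w2 (zpair i).2 + eps * w i.

End Toric.

Arguments zpair {r s} Q i.
Arguments zvar {K r s} Q j k.
Arguments xvar {K r s} j.
Arguments yvar {K r s} k.
Arguments phiQ {K r s} Q p.
Arguments IQ {K r s} Q p.
Arguments sum_ideal {K r s} I J _.
Arguments fiber_prod {K r s} Q I J _.
Arguments HQ {K r s} Q h.
Arguments adjx {r s} Q j k.
Arguments adjy {r s} Q k j.
Arguments zvar_y {K r s} Q k j.
Arguments omega' {R r s} Q w1 w2 eps w _.

(* Main.v *)
Require Import Defs.
From HB Require Import structures.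
From mathcomp Require Import all_boot all_order all_algebra all_fingroup.
From mathcomp Require Import mpoly.
From mathcomp Require Import ring lra.
From Stdlib Require Import Classical ClassicalEpsilon.

Set Implicit Arguments.
Unset Strict Implicit.
Unset Printing Implicit Defensive.
Import Order.TTheory GRing.Theory Num.Theory.
Local Open Scope ring_scope.
Notation wt := Defs.mweight.
Section Gen.
Variables (K : fieldType) (R : realFieldType) (n : nat).
Implicit Types (v : 'I_n -> R) (f g p : {mpoly K[n]}) (m u : 'X_{1..n}).

Lemma mweightD v m1 m2 : wt v (m1 + m2)%MM = wt v m1 + wt v m2.
Proof.
by rewrite /Defs.mweight -big_split /=; apply: eq_bigr => i _; rewrite mnmDE natrD mulrDr.
Qed.

Lemma mweight0 v : wt v 0%MM = 0.
Proof. by rewrite /Defs.mweight big1 // => i _; rewrite mnm0E mulr0. Qed.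

Lemma mweightU v i : wt v U_(i)%MM = v i.
Proof.
rewrite /Defs.mweight (bigD1 i) //= big1 ?addr0 => [|j ji]; first by rewrite mnm1E eqxx mulr1.
by rewrite mnm1E eq_sym (negbTE ji) mulr0.
Qed.

Lemma mweightMn v m k : wt v (m *+ k)%MM = wt v m *+ k.
Proof.
rewrite /Defs.mweight -sumrMnl; apply: eq_bigr => i _.
by rewrite mulmnE natrM mulrA mulr_natr.
Qed.

Lemma mweight_sum (I : Type) (s : seq I) (P : pred I) (F : I -> 'X_{1..n}) v :
  wt v (\big[+%MM/0%MM]_(x <- s | P x) F x) = \sum_(x <- s | P x) wt v (F x).
Proof.
elim: s => [|x s IH]; first by rewrite !big_nil mweight0.
by rewrite !big_cons; case: (P x); rewrite ?mweightD IH.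
Qed.

Lemma coef_filter_sum (P : pred 'X_{1..n}) f m :
  (\sum_(m0 <- msupp f | P m0) f@_m0 *: 'X_[m0])@_m = if P m then f@_m else 0.
Proof.
rewrite raddf_sum /=.
rewrite (eq_bigr (fun m0 => if m0 == m then f@_m else 0)); last first.
  by move=> m0 _; rewrite mcoeffZ mcoeffX; case: eqP => [->|_]; rewrite ?mulr1 ?mulr0.
rewrite -big_mkcondr /=.
case: (boolP (m \in msupp f)) => mf.
  rewrite (big_rem m) //= eqxx andbT big1_seq ?addr0 //.
  move=> y /andP [/andP [_ /eqP ym] yr]; exfalso.
  by move: yr; rewrite ym mem_rem_uniqF // msupp_uniq.
by rewrite memN_msupp_eq0 // big1 //; case: (P m).
Qed.

Definition part v (W : R) f : {mpoly K[n]} :=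
  \sum_(m <- msupp f | wt v m == W) f@_m *: 'X_[m].

Lemma part_coef v W f m : (part v W f)@_m = if wt v m == W then f@_m else 0.
Proof. exact: coef_filter_sum. Qed.

Lemma in_w_coef v f m :
  (in_w v f)@_m = if all (fun m' => wt v m' <= wt v m) (msupp f) then f@_m else 0.
Proof. exact: coef_filter_sum. Qed.

Lemma partD v W f g : part v W (f + g) = part v W f + part v W g.
Proof.
apply/mpolyP => m; rewrite mcoeffD !part_coef mcoeffD.
by case: (wt v m == W); rewrite ?addr0.
Qed.

Lemma partZ v W c f : part v W (c *: f) = c *: part v W f.
Proof.
apply/mpolyP => m; rewrite mcoeffZ !part_coef mcoeffZ.
by case: (wt v m == W); rewrite ?mulr0.
Qed.

Lemma part0 v W : part v W 0 = 0.
Proof. by apply/mpolyP => m; rewrite part_coef mcoeff0; case: ifP. Qed.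

Lemma part_sum v W (I : Type) (s : seq I) (P : pred I) (F : I -> {mpoly K[n]}) :
  part v W (\sum_(x <- s | P x) F x) = \sum_(x <- s | P x) part v W (F x).
Proof.
elim: s => [|x s IH]; first by rewrite !big_nil part0.
by rewrite !big_cons; case: (P x); rewrite ?partD IH.
Qed.

Lemma part_le v V g : (forall m, m \in msupp g -> wt v m <= V) ->
  part v V g = 0 \/ part v V g = in_w v g.
Proof.
move=> Hle.
case: (boolP (has (fun m => wt v m == V) (msupp g))) => [/hasP [m0 m0g /eqP m0V]|hn].
  right; apply/mpolyP => m; rewrite part_coef in_w_coef.
  case: (boolP (m \in msupp g)) => mg; last by rewrite (memN_msupp_eq0 mg); case: ifP; case: ifP.
  case: eqP => [->|ne].
    by rewrite (_ : all _ _ = true) //; apply/allP => m' /Hle.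
  rewrite (_ : all _ _ = false) //; apply/negbTE/allPn; exists m0 => //.
  by rewrite -ltNge m0V lt_def Hle // andbT; apply/eqP => /esym.
left; apply/mpolyP => m; rewrite part_coef mcoeff0.
case: eqP => // mV; apply: memN_msupp_eq0; apply: contra hn => mg.
by apply/hasP; exists m => //; apply/eqP.
Qed.

Lemma exists_max v (s : seq 'X_{1..n}) : s != [::] ->
  exists2 m, m \in s & forall m', m' \in s -> wt v m' <= wt v m.
Proof.
elim: s => // x s IH _.
case: (altP (s =P [::])) => [->|/IH [m ms Hm]].
  by exists x; rewrite ?mem_head // => m'; rewrite inE => /eqP ->.
case: (leP (wt v x) (wt v m)) => H.
  exists m; first by rewrite inE ms orbT.
  by move=> m'; rewrite inE => /orP [/eqP ->|/Hm].
exists x; first by rewrite mem_head.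
move=> m'; rewrite inE => /orP [/eqP ->//|/Hm H']; exact: (le_trans H' (ltW H)).
Qed.

Lemma in_w_part v f : f != 0 -> exists W,
  [/\ exists2 m, m \in msupp f & wt v m = W,
      forall m, m \in msupp f -> wt v m <= W & in_w v f = part v W f].
Proof.
rewrite -msupp_eq0 => /(exists_max v) [m0 m0f Hm0].
exists (wt v m0); split => //; first by exists m0.
apply/mpolyP => m; rewrite part_coef in_w_coef.
case: (boolP (m \in msupp f)) => mf; last by rewrite (memN_msupp_eq0 mf); case: ifP; case: ifP.
case: eqP => [->|ne]; first by rewrite (_ : all _ _ = true) //; apply/allP => m' /Hm0.
rewrite (_ : all _ _ = false) //; apply/negbTE/allPn; exists m0 => //.
by rewrite -ltNge lt_def Hm0 // andbT; apply/eqP => E; apply: ne; rewrite E.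
Qed.

Lemma in_w_neq0 v f : f != 0 -> in_w v f != 0.
Proof.
rewrite -msupp_eq0 => fn; have := fn; move/(exists_max v) => [m0 m0f Hm0].
apply/eqP => /mpolyP /(_ m0); rewrite in_w_coef mcoeff0.
rewrite (_ : all _ _ = true); last by apply/allP => m' /Hm0.
by move/eqP; rewrite mcoeff_eq0 m0f.
Qed.

Lemma in_w0 v : in_w v (0 : {mpoly K[n]}) = 0.
Proof. by rewrite /in_w msupp0 big_nil. Qed.

Lemma coefMX u g m :
  ('X_[u] * g)@_m = if (u <= m)%MM then g@_(m - u)%MM else 0.
Proof.
rewrite mpoly_mulC; case: ifP => um.
  by rewrite -{1}(submK um) addmC mcoeffMX.
apply: memN_msupp_eq0; rewrite (perm_mem (msuppMX _ _)).
apply/negP => /mapP [m' _ E]; move/negP: um; apply; rewrite E; exact: lem_addr.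
Qed.

Lemma msuppMX_sub u g m : m \in msupp ('X_[u] * g) ->
  exists2 m', m' \in msupp g & m = (u + m')%MM.
Proof.
rewrite mpoly_mulC (perm_mem (msuppMX _ _)) => /mapP [m' m'g ->]; by exists m'.
Qed.

Lemma part_mulX v W u g :
  part v W ('X_[u] * g) = 'X_[u] * part v (W - wt v u) g.
Proof.
apply/mpolyP => m; rewrite part_coef !coefMX.
case: (boolP (u <= m)%MM) => um; last first.
  by case: (wt v m == W).
  
rewrite part_coef.
have -> : wt v m = wt v (m - u)%MM + wt v u by rewrite -mweightD submK.
by rewrite -(inj_eq (addIr (- wt v u))) addrK.
Qed.

Lemma wt_bound v m : `|wt v m| <= (mdeg m)%:R * \sum_i `|v i|.
Proof.
rewrite /Defs.mweight mdegE natr_sum mulr_suml.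
apply: le_trans (ler_norm_sum _ _ _) _; apply: ler_sum => i _.
rewrite normrM normr_nat mulrC ler_wpM2l //.
rewrite (bigD1 i) //= lerDl; apply: sumr_ge0 => j _; exact: normr_ge0.
Qed.

End Gen.

Section Ideal.
Variables (K : fieldType) (n : nat).
Implicit Types (S T : {mpoly K[n]} -> Prop) (p q a : {mpoly K[n]}).

Lemma ig_in S p : S p -> ideal_gen S p.
Proof.
move=> Sp; exists [:: (1, p)]; split; first by move=> x; rewrite inE => /eqP ->.
by rewrite big_seq1 mul1r.
Qed.

Lemma ig0 S : ideal_gen S 0.
Proof. by exists [::]; rewrite big_nil. Qed.

Lemma igD S p q : ideal_gen S p -> ideal_gen S q -> ideal_gen S (p + q).
Proof.
move=> [l1 [H1 ->]] [l2 [H2 ->]]; exists (l1 ++ l2); split; last by rewrite big_cat.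
by move=> x; rewrite mem_cat => /orP [/H1|/H2].
Qed.

Lemma igM S a p : ideal_gen S p -> ideal_gen S (a * p).
Proof.
move=> [l [H ->]]; exists [seq (a * x.1, x.2) | x <- l]; split.
  by move=> x /mapP [y yl ->]; exact: (H y yl).
by rewrite big_map mulr_sumr; apply: eq_bigr => x _; rewrite mulrA.
Qed.

Lemma igZ S c p : ideal_gen S p -> ideal_gen S (c *: p).
Proof. by rewrite -mul_mpolyC; apply: igM. Qed.

Lemma igN S p : ideal_gen S p -> ideal_gen S (- p).
Proof. by rewrite -mulN1r; apply: igM. Qed.

Lemma igB S p q : ideal_gen S p -> ideal_gen S q -> ideal_gen S (p - q).
Proof. by move=> Hp Hq; apply: igD => //; apply: igN. Qed.

Lemma ig_sum S (I : eqType) (s : seq I) (P : pred I) (F : I -> {mpoly K[n]}) :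
  (forall x, x \in s -> P x -> ideal_gen S (F x)) ->
  ideal_gen S (\sum_(x <- s | P x) F x).
Proof.
elim: s => [|x s IH] H; first by rewrite big_nil; apply: ig0.
rewrite big_cons; case: ifP => Px.
  by apply: igD; [apply: H; rewrite ?mem_head | apply: IH => y ys; apply: H; rewrite inE ys orbT].
by apply: IH => y ys; apply: H; rewrite inE ys orbT.
Qed.

Lemma ig_sub S T p : (forall q, S q -> ideal_gen T q) -> ideal_gen S p -> ideal_gen T p.
Proof.
move=> HST [l [H ->]]; apply: ig_sum => x xl _; apply: igM; exact/HST/H.
Qed.

Lemma ig_mono S T p : (forall q, S q -> T q) -> ideal_gen S p -> ideal_gen T p.
Proof. by move=> H; apply: ig_sub => q /H; apply: ig_in. Qed.

Lemma ig_idem S p : ideal_gen (ideal_gen S) p -> ideal_gen S p.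
Proof. by apply: ig_sub. Qed.

End Ideal.

Section WtInd.
Variables (R : realFieldType) (n : nat) (v : 'I_n -> R).

Lemma count_split (T : Type) (a1 a2 : pred T) (s : seq T) :
  (forall x, a1 x -> a2 x) ->
  count a2 s = (count a1 s + count (fun x => a2 x && ~~ a1 x) s)%N.
Proof.
move=> H; elim: s => //= x s ->.
case: (boolP (a1 x)) => a1x; first by rewrite (H _ a1x) /= addnA.
case: (a2 x) => /=; by rewrite ?add0n ?addn0 ?addnS ?add1n.
Qed.

Lemma wt_ind (P : 'X_{1..n} -> Prop) :
  (forall u, (forall u', mdeg u' = mdeg u -> wt v u' < wt v u -> P u') -> P u) ->
  forall u, P u.
Proof.
move=> IH u.
pose D := mdeg u.
pose L := [seq val x | x <- enum {: 'X_{1..n < D.+1}}].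
have inL : forall u', mdeg u' = D -> u' \in L.
  move=> u' du'; have h : (mdeg u' < D.+1)%N by rewrite du'.
  by apply/mapP; exists (BMultinom h); rewrite ?mem_enum.
pose mu u0 := count (fun u' => (mdeg u' == D) && (wt v u' < wt v u0)) L.
suff : forall k u0, mdeg u0 = D -> (mu u0 <= k)%N -> P u0 by apply => //.
have key : forall u0 u', mdeg u' = D -> wt v u' < wt v u0 -> (mu u' < mu u0)%N.
  move=> u0 u' du' lt.
  rewrite /mu (@count_split _ (fun u2 => (mdeg u2 == D) && (wt v u2 < wt v u')) (fun u2 => (mdeg u2 == D) && (wt v u2 < wt v u0))).
    rewrite -[X in (X < _)%N]addn0 ltn_add2l -has_count; apply/hasP; exists u'; first exact: inL.
    by rewrite du' eqxx lt ltxx.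
  by move=> x /andP [-> h] /=; exact: lt_trans h lt.
elim => [|k IHk] u0 du0 hk; apply: IH => u' du' lt; rewrite du0 in du'.
  by have := key u0 u' du' lt; rewrite ltnNge (leq_trans hk (leq0n _)).
apply: IHk => //; have := key u0 u' du' lt => h; rewrite -ltnS; exact: leq_trans h hk.
Qed.

End WtInd.

Section Lead.
Variables (K : fieldType) (R : realFieldType) (n : nat).
Implicit Types (v : 'I_n -> R) (f g p : {mpoly K[n]}) (m u : 'X_{1..n}).


Lemma lead_uniq v f m0 m1 : lead_mono v f m0 -> lead_mono v f m1 -> m0 = m1.
Proof.
move=> [m0f H0] [m1f H1]; apply/eqP; apply/negPn/negP => ne.
have h1 := H1 _ m0f ne; have h2 := H0 _ m1f.
rewrite eq_sym in ne; have := lt_trans h1 (h2 ne); by rewrite ltxx.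
Qed.

Lemma in_w_lead v f m0 : lead_mono v f m0 -> in_w v f = f@_m0 *: 'X_[m0].
Proof.
move=> [m0f H0]; apply/mpolyP => m; rewrite in_w_coef mcoeffZ mcoeffX.
case: (altP (m0 =P m)) => [<-|ne].
  rewrite mulr1 (_ : all _ _ = true) //; apply/allP => m' m'f.
  by case: (altP (m' =P m0)) => [->//|ne']; apply: ltW; apply: H0.
rewrite mulr0; case: (boolP (m \in msupp f)) => mf; last by rewrite (memN_msupp_eq0 mf) if_same.
rewrite (_ : all _ _ = false) //; apply/negbTE/allPn; exists m0 => //.
by rewrite -ltNge; apply: H0; rewrite // eq_sym.
Qed.

Lemma lead_coef_neq0 v f m0 : lead_mono v f m0 -> f@_m0 != 0.
Proof. by move=> [m0f _]; rewrite -mcoeff_msupp. Qed.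

Lemma msupp_in_w v f m : m \in msupp (in_w v f) -> m \in msupp f.
Proof.
rewrite !mcoeff_msupp in_w_coef; case: ifP => //; by rewrite eqxx.
Qed.

Lemma ig_monomial_supp (T : {mpoly K[n]} -> Prop) (B : 'X_{1..n} -> Prop) p :
  (forall q, T q -> exists c m0, B m0 /\ q = c *: 'X_[m0]) ->
  ideal_gen T p -> forall m, m \in msupp p -> exists2 m0, B m0 & (m0 <= m)%MM.
Proof.
move=> HT [l [Hl ->]] m /msupp_sum_le /flattenP [s /mapP [x xl ->]] {s} mx.
rewrite filter_predT in xl; have [c [m0 [Bm0 E]]] := HT _ (Hl _ xl).
move: mx; rewrite E -scalerAr => /msuppZ_le.
rewrite mpoly_mulC => /msuppMX_sub [m' _ ->]; exists m0 => //; exact: lem_addr.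
Qed.

Lemma mulX_supp_expand u p :
  'X_[u] * p = \sum_(m <- msupp p) p@_m *: 'X_[(u + m)%MM].
Proof.
rewrite {1}(mpolyE p) mulr_sumr; apply: eq_bigr => m _.
by rewrite -scalerAr mpolyXD.
Qed.

End Lead.

Section OneSide.
Variables (K : fieldType) (R : realFieldType) (n : nat) (w1 : 'I_n -> R).
Variables (I : {mpoly K[n]} -> Prop) (F : seq {mpoly K[n]}).
Hypothesis Iid : exists S, forall p, I p <-> ideal_gen S p.
Hypothesis GB : groebner_basis w1 (fun f => f \in F) I.
Hypothesis Flead : forall f, f \in F -> exists d m0, f \is d.-homog /\ lead_mono w1 f m0.

Definition stdm (m : 'X_{1..n}) : Prop :=
  forall f m0, f \in F -> lead_mono w1 f m0 -> ~ (m0 <= m)%MM.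

Lemma I0 : I 0.
Proof. by have [S HS] := Iid; apply/HS/ig0. Qed.
Lemma ID p q : I p -> I q -> I (p + q).
Proof. by have [S HS] := Iid; move=> /HS a /HS b; apply/HS/igD. Qed.
Lemma IM a p : I p -> I (a * p).
Proof. by have [S HS] := Iid; move=> /HS b; apply/HS/igM. Qed.
Lemma IZ c p : I p -> I (c *: p).
Proof. by rewrite -mul_mpolyC; apply: IM. Qed.

Lemma std_zero p : I p -> (forall m, m \in msupp p -> stdm m) -> p = 0.
Proof.
move=> Ip Hs; apply/eqP; apply/negPn/negP => pn.
have inz := in_w_neq0 w1 pn.
have H1 : init_ideal w1 I (in_w w1 p) by apply: ig_in; exists p.
have := (proj2 GB (in_w w1 p)).1 H1 => H2.
have [m mi] : exists m, m \in msupp (in_w w1 p).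
  by move: inz; rewrite -msupp_eq0; case: (msupp _) => // m s _; exists m; rewrite mem_head.
have := ig_monomial_supp (B := fun m0 => exists2 f, f \in F & lead_mono w1 f m0) _ H2 mi.
case.
  move=> q [g [gF ->]]; have [d [m0 [_ L]]] := Flead gF.
  by exists g@_m0, m0; split; [exists g | exact: in_w_lead].
move=> m0 [f fF L] le; exact: (Hs m (msupp_in_w mi) f m0 fF L le).
Qed.

Lemma IB p q : I p -> I q -> I (p - q).
Proof. by move=> Ip Iq; apply: ID => //; rewrite -scaleN1r; apply: IZ. Qed.

Lemma I_sum (J : Type) (s : seq J) (P : pred J) (G : J -> {mpoly K[n]}) :
  (forall x, P x -> I (G x)) -> I (\sum_(x <- s | P x) G x).
Proof.
move=> H; elim: s => [|x s IH]; first by rewrite big_nil; apply: I0.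
by rewrite big_cons; case: ifP => // Px; apply: ID => //; apply: H.
Qed.

Definition Dec p := exists i s, [/\ I i, forall m, m \in msupp s -> stdm m & p = i + s].

Lemma DecD p q : Dec p -> Dec q -> Dec (p + q).
Proof.
move=> [i1 [s1 [I1 S1 ->]]] [i2 [s2 [I2 S2 ->]]]; exists (i1 + i2), (s1 + s2); split.
- exact: ID.
- by move=> m /msuppD_le; rewrite mem_cat => /orP [/S1|/S2].
- by rewrite addrACA.
Qed.

Lemma DecZ c p : Dec p -> Dec (c *: p).
Proof.
move=> [i [s [Ii Ss ->]]]; exists (c *: i), (c *: s); split.
- exact: IZ.
- by move=> m /msuppZ_le /Ss.
- by rewrite scalerDr.
Qed.

Lemma Dec0 : Dec 0.
Proof. by exists 0, 0; split; rewrite ?addr0 ?msupp0 //; apply: I0. Qed.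

Lemma Dec_sum (J : eqType) (s : seq J) (P : pred J) (G : J -> {mpoly K[n]}) :
  (forall x, x \in s -> P x -> Dec (G x)) -> Dec (\sum_(x <- s | P x) G x).
Proof.
elim: s => [|x s IH] H; first by rewrite big_nil; apply: Dec0.
rewrite big_cons; case: ifP => Px.
  by apply: DecD; [apply: H; rewrite ?mem_head | apply: IH => y ys; apply: H; rewrite inE ys orbT].
by apply: IH => y ys; apply: H; rewrite inE ys orbT.
Qed.

Lemma DecI p : I p -> Dec p.
Proof. by move=> Ip; exists p, 0; split; rewrite ?addr0 ?msupp0. Qed.

Lemma rest_supp (f : {mpoly K[n]}) m0 m : m \in msupp (f - f@_m0 *: 'X_[m0]) -> m \in msupp f /\ m != m0.
Proof.
move=> H; move: H; rewrite [m \in msupp (_ - _)]mcoeff_msupp mcoeffB mcoeffZ mcoeffX.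
case: (altP (m0 =P m)) => [->|ne]; first by rewrite mulr1 subrr; move/negP.
by rewrite mulr0 subr0 -mcoeff_msupp eq_sym => ->.
Qed.

Lemma Dec_mono u : Dec 'X_[u].
Proof.
elim/(@wt_ind _ _ w1): u => u IH.
case: (classic (stdm u)) => [su|nsu].
  by exists 0, 'X_[u]; split; rewrite ?add0r //; [apply: I0 | move=> m; rewrite msuppX inE => /eqP ->].
have [f [m0 [fF [L le]]]] : exists f m0, f \in F /\ lead_mono w1 f m0 /\ (m0 <= u)%MM.
  apply: NNPP => H; apply: nsu => f m0 fF L le; apply: H; by exists f, m0.
have [d [m0' [hom L']]] := Flead fF; have E := lead_uniq L L'; subst m0'.
set c := f@_m0; have cn : c != 0 by apply: lead_coef_neq0 L.
set u' := (u - m0)%MM.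
have Eu : 'X_[u] = c^-1 *: ('X_[u'] * f) - c^-1 *: ('X_[u'] * (f - c *: 'X_[m0])).
  rewrite -scalerBr -mulrBr opprB addrC subrK -scalerAr -mpolyXD submK //.
  by rewrite scalerA mulVf // scale1r.
rewrite Eu; apply: DecD; first by apply: DecI; apply: IZ; apply: IM; case: GB => H _; apply: H.
rewrite -scaleNr; apply: DecZ; rewrite mulX_supp_expand; apply: Dec_sum => m mr _.
apply: DecZ; have [mf mn] := rest_supp mr; apply: IH.
  rewrite mdegD -[in RHS](submK le) mdegD; congr (_ + _)%N.
  by rewrite (dhomog_mf hom mf) (dhomog_mf hom (proj1 L)).
rewrite mweightD -[in X in _ < X](submK le) mweightD ltrD2l.
by apply: (proj2 L).
Qed.

Lemma Dec_all p : Dec p.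
Proof.
rewrite (mpolyE p); apply: Dec_sum => m _ _; apply: DecZ; exact: Dec_mono.
Qed.

End OneSide.

Section LinExt.
Variables (K : fieldType) (n N : nat) (T : 'X_{1..n} -> {mpoly K[N]}).

Definition LT (p : {mpoly K[n]}) : {mpoly K[N]} := \sum_(m <- msupp p) p@_m *: T m.

Lemma LT_ext (s : seq 'X_{1..n}) p : uniq s -> {subset msupp p <= s} ->
  LT p = \sum_(m <- s) p@_m *: T m.
Proof.
move=> us sub; rewrite /LT [RHS](bigID (fun m => m \in msupp p)) /=.
rewrite [X in _ + X]big1 ?addr0; last by move=> m /memN_msupp_eq0 ->; rewrite scale0r.
rewrite -[RHS]big_filter; apply: perm_big; apply: uniq_perm; rewrite ?msupp_uniq ?filter_uniq //.
by move=> m; rewrite mem_filter; case: (boolP (m \in msupp p)) => // /sub ->.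
Qed.

Lemma LTD p q : LT (p + q) = LT p + LT q.
Proof.
set s := undup (msupp p ++ msupp q).
have us : uniq s by apply: undup_uniq.
rewrite (@LT_ext s) // ?(@LT_ext s p) ?(@LT_ext s q) //.
- by rewrite -big_split; apply: eq_bigr => m _; rewrite mcoeffD scalerDl.
- by move=> m mq; rewrite mem_undup mem_cat mq orbT.
- by move=> m mp; rewrite mem_undup mem_cat mp.
- by move=> m /msuppD_le; rewrite mem_undup.
Qed.

Lemma LTZ c p : LT (c *: p) = c *: LT p.
Proof.
rewrite (@LT_ext (msupp p)) ?msupp_uniq //; last by move=> m /msuppZ_le.
by rewrite /LT scaler_sumr; apply: eq_bigr => m _; rewrite mcoeffZ scalerA.
Qed.

Lemma LT0 : LT 0 = 0.
Proof. by rewrite /LT msupp0 big_nil. Qed.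

Lemma LT_sum (I : Type) (s : seq I) (P : pred I) (G : I -> {mpoly K[n]}) :
  LT (\sum_(x <- s | P x) G x) = \sum_(x <- s | P x) LT (G x).
Proof.
elim: s => [|x s IH]; first by rewrite !big_nil LT0.
by rewrite !big_cons; case: (P x); rewrite ?LTD IH.
Qed.

Lemma LTX m : LT 'X_[m] = T m.
Proof. by rewrite /LT msuppX big_seq1 mcoeffX eqxx scale1r. Qed.

Lemma LTZX c m : LT (c *: 'X_[m]) = c *: T m.
Proof. by rewrite LTZ LTX. Qed.

End LinExt.

Section XY.
Variables (K : fieldType) (r s : nat).

Definition xpart (m : 'X_{1..r + s}) : 'X_{1..r} := [multinom m (lshift s j) | j < r].
Definition ypart (m : 'X_{1..r + s}) : 'X_{1..s} := [multinom m (rshift r k) | k < s].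
Definition embx (a : 'X_{1..r}) : 'X_{1..r + s} := (\sum_(j < r) U_(lshift s j) *+ a j)%MM.
Definition emby (b : 'X_{1..s}) : 'X_{1..r + s} := (\sum_(k < s) U_(rshift r k) *+ b k)%MM.

Lemma embx_l a j : embx a (lshift s j) = a j.
Proof.
rewrite /embx mnm_sumE (bigD1 j) //= big1 ?addn0.
  by rewrite mulmnE mnm1E eqxx mul1n.
by move=> i ij; rewrite mulmnE mnm1E (inj_eq (@lshift_inj _ _)) (negbTE ij).
Qed.

Lemma embx_r a k : embx a (rshift r k) = 0%N.
Proof.
rewrite /embx mnm_sumE big1 // => i _.
by rewrite mulmnE mnm1E eq_lrshift.
Qed.

Lemma emby_r b k : emby b (rshift r k) = b k.
Proof.
rewrite /emby mnm_sumE (bigD1 k) //= big1 ?addn0.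
  by rewrite mulmnE mnm1E eqxx mul1n.
by move=> i ik; rewrite mulmnE mnm1E (inj_eq (@rshift_inj _ _)) (negbTE ik).
Qed.

Lemma emby_l b j : emby b (lshift s j) = 0%N.
Proof.
rewrite /emby mnm_sumE big1 // => i _.
by rewrite mulmnE mnm1E eq_rlshift.
Qed.

Lemma xpartE m j : xpart m j = m (lshift s j). Proof. by rewrite mnmE. Qed.
Lemma ypartE m k : ypart m k = m (rshift r k). Proof. by rewrite mnmE. Qed.

Lemma split_mon m : m = (embx (xpart m) + emby (ypart m))%MM.
Proof.
apply/mnmP => i; rewrite mnmDE; case: (splitP i) => [j Ej|k Ek].
  have -> : i = lshift s j by apply/val_inj.
  by rewrite embx_l emby_l addn0 xpartE.
have -> : i = rshift r k by apply/val_inj.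
by rewrite embx_r emby_r add0n ypartE.
Qed.

Lemma xpartD m1 m2 : xpart (m1 + m2)%MM = (xpart m1 + xpart m2)%MM.
Proof. by apply/mnmP => j; rewrite mnmDE !xpartE mnmDE. Qed.
Lemma ypartD m1 m2 : ypart (m1 + m2)%MM = (ypart m1 + ypart m2)%MM.
Proof. by apply/mnmP => j; rewrite mnmDE !ypartE mnmDE. Qed.
Lemma xpart_embx a : xpart (embx a) = a.
Proof. by apply/mnmP => j; rewrite xpartE embx_l. Qed.
Lemma ypart_embx a : ypart (embx a) = 0%MM.
Proof. by apply/mnmP => j; rewrite ypartE embx_r mnm0E. Qed.
Lemma xpart_emby b : xpart (emby b) = 0%MM.
Proof. by apply/mnmP => j; rewrite xpartE emby_l mnm0E. Qed.
Lemma ypart_emby b : ypart (emby b) = b.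
Proof. by apply/mnmP => j; rewrite ypartE emby_r. Qed.

Lemma incl_xX a : incl_x s 'X_[a] = 'X_[embx a] :> {mpoly K[r + s]}.
Proof.
rewrite /incl_x comp_mpolyX /embx -mprodXnE; apply: eq_bigr => j _.
by rewrite tnth_mktuple.
Qed.

Lemma incl_yX b : incl_y r 'X_[b] = 'X_[emby b] :> {mpoly K[r + s]}.
Proof.
rewrite /incl_y comp_mpolyX /emby -mprodXnE; apply: eq_bigr => j _.
by rewrite tnth_mktuple.
Qed.

End XY.

Section S2.
Variables (K : fieldType) (R : realFieldType) (r s : nat).
Variables (w1 : 'I_r -> R) (w2 : 'I_s -> R).
Variables (I : {mpoly K[r]} -> Prop) (J : {mpoly K[s]} -> Prop).
Variables (F : seq {mpoly K[r]}) (G : seq {mpoly K[s]}).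
Hypothesis Iid : exists S, forall p, I p <-> ideal_gen S p.
Hypothesis Jid : exists S, forall p, J p <-> ideal_gen S p.
Hypothesis GBI : groebner_basis w1 (fun f => f \in F) I.
Hypothesis GBJ : groebner_basis w2 (fun f => f \in G) J.
Hypothesis Flead : forall f, f \in F -> exists d m0, f \is d.-homog /\ lead_mono w1 f m0.
Hypothesis Glead : forall f, f \in G -> exists d m0, f \is d.-homog /\ lead_mono w2 f m0.

Lemma exNFx (a : 'X_{1..r}) : exists s0 : {mpoly K[r]},
  I ('X_[a] - s0) /\ forall m, m \in msupp s0 -> stdm w1 F m.
Proof.
have [i [s0 [Ii Ss E]]] := Dec_mono Iid GBI Flead a.
by exists s0; split => //; rewrite E addrK.
Qed.

Lemma exNFy (a : 'X_{1..s}) : exists s0 : {mpoly K[s]},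
  J ('X_[a] - s0) /\ forall m, m \in msupp s0 -> stdm w2 G m.
Proof.
have [i [s0 [Ii Ss E]]] := Dec_mono Jid GBJ Glead a.
by exists s0; split => //; rewrite E addrK.
Qed.

Definition NFx a := proj1_sig (constructive_indefinite_description _ (exNFx a)).
Definition NFy a := proj1_sig (constructive_indefinite_description _ (exNFy a)).

Lemma NFxP a : I ('X_[a] - NFx a) /\ forall m, m \in msupp (NFx a) -> stdm w1 F m.
Proof. exact: (proj2_sig (constructive_indefinite_description _ (exNFx a))). Qed.
Lemma NFyP a : J ('X_[a] - NFy a) /\ forall m, m \in msupp (NFy a) -> stdm w2 G m.
Proof. exact: (proj2_sig (constructive_indefinite_description _ (exNFy a))). Qed.

Lemma Lx_I p : I p -> LT NFx p = 0.
Proof.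
move=> Ip; apply: (std_zero GBI Flead).
  have H : I (p - LT NFx p).
    rewrite {1}(mpolyE p) /LT -sumrB; apply: I_sum => // m _.
    by rewrite -scalerBr; apply: IZ => //; case: (NFxP m).
  have -> : LT NFx p = p - (p - LT NFx p) by rewrite opprB addrC subrK.
  exact: IB.
move=> m /msupp_sum_le /flattenP [t /mapP [m' _ ->]] /msuppZ_le.
by case: (NFxP m') => _; apply.
Qed.

Lemma Ly_J p : J p -> LT NFy p = 0.
Proof.
move=> Ip; apply: (std_zero GBJ Glead).
  have H : J (p - LT NFy p).
    rewrite {1}(mpolyE p) /LT -sumrB; apply: I_sum => // m _.
    by rewrite -scalerBr; apply: IZ => //; case: (NFyP m).
  have -> : LT NFy p = p - (p - LT NFy p) by rewrite opprB addrC subrK.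
  exact: IB.
move=> m /msupp_sum_le /flattenP [t /mapP [m' _ ->]] /msuppZ_le.
by case: (NFyP m') => _; apply.
Qed.

Lemma NFx_std a : stdm w1 F a -> NFx a = 'X_[a].
Proof.
move=> sa; apply/esym/eqP; rewrite -subr_eq0; apply/eqP.
apply: (std_zero GBI Flead); first by case: (NFxP a).
move=> m /msuppB_le; rewrite mem_cat msuppX inE => /orP [/eqP ->//|].
by case: (NFxP a) => _; apply.
Qed.

Lemma NFy_std a : stdm w2 G a -> NFy a = 'X_[a].
Proof.
move=> sa; apply/esym/eqP; rewrite -subr_eq0; apply/eqP.
apply: (std_zero GBJ Glead); first by case: (NFyP a).
move=> m /msuppB_le; rewrite mem_cat msuppX inE => /orP [/eqP ->//|].
by case: (NFyP a) => _; apply.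
Qed.

Definition NT (m : 'X_{1..r + s}) : {mpoly K[r + s]} :=
  incl_x s (NFx (xpart m)) * incl_y r (NFy (ypart m)).

Lemma incl_xE (f : {mpoly K[r]}) :
  incl_x s f = \sum_(m <- msupp f) f@_m *: 'X_[embx s m] :> {mpoly K[r + s]}.
Proof. by rewrite /incl_x comp_mpolyEX; apply: eq_bigr => m _; rewrite -/(incl_x s _) incl_xX. Qed.

Lemma incl_yE (f : {mpoly K[s]}) :
  incl_y r f = \sum_(m <- msupp f) f@_m *: 'X_[emby r m] :> {mpoly K[r + s]}.
Proof. by rewrite /incl_y comp_mpolyEX; apply: eq_bigr => m _; rewrite -/(incl_y r _) incl_yX. Qed.

Lemma N_killx mu f : I f -> LT NT ('X_[mu] * incl_x s f) = 0.
Proof.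
move=> If; rewrite incl_xE mulr_sumr LT_sum.
rewrite (eq_bigr (fun m => f@_m *: (incl_x s (NFx (xpart mu + m)%MM) * incl_y r (NFy (ypart mu))))); last first.
  move=> m _; rewrite -scalerAr -mpolyXD LTZX /NT.
  by rewrite xpartD ypartD xpart_embx ypart_embx addm0.
under eq_bigr do rewrite scalerAl.
rewrite -mulr_suml.
have -> : \sum_(i <- msupp f) f@_i *: incl_x s (NFx (xpart mu + i)%MM) =
          incl_x s (LT NFx ('X_[xpart mu] * f)).
  rewrite mulX_supp_expand LT_sum /incl_x linear_sum; apply: eq_bigr => m _.
  by rewrite LTZX linearZ.
rewrite Lx_I; first by rewrite /incl_x comp_mpoly0 mul0r.
by apply: IM.
Qed.

Lemma N_killy mu f : J f -> LT NT ('X_[mu] * incl_y r f) = 0.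
Proof.
move=> If; rewrite incl_yE mulr_sumr LT_sum.
rewrite (eq_bigr (fun m => f@_m *: (incl_x s (NFx (xpart mu)) * incl_y r (NFy (ypart mu + m)%MM)))); last first.
  move=> m _; rewrite -scalerAr -mpolyXD LTZX /NT.
  by rewrite xpartD ypartD xpart_emby ypart_emby addm0.
under eq_bigr do rewrite scalerAr.
rewrite -mulr_sumr.
have -> : \sum_(i <- msupp f) f@_i *: incl_y r (NFy (ypart mu + i)%MM) =
          incl_y r (LT NFy ('X_[ypart mu] * f)).
  rewrite mulX_supp_expand LT_sum /incl_y linear_sum; apply: eq_bigr => m _.
  by rewrite LTZX linearZ.
rewrite Ly_J; first by rewrite /incl_y comp_mpoly0 mulr0.
by apply: IM.
Qed.

Lemma N_kill_gen q P : I P -> LT NT (q * incl_x s P) = 0.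
Proof.
move=> IP; rewrite (mpolyE q) mulr_suml LT_sum big1 // => m _.
by rewrite -scalerAl LTZ N_killx ?scaler0.
Qed.

Lemma N_kill_geny q P : J P -> LT NT (q * incl_y r P) = 0.
Proof.
move=> IP; rewrite (mpolyE q) mulr_suml LT_sum big1 // => m _.
by rewrite -scalerAl LTZ N_killy ?scaler0.
Qed.

Lemma N_sum_ideal P : sum_ideal I J P -> LT NT P = 0.
Proof.
move=> [l [Hl ->]]; rewrite LT_sum big1_seq // => x /andP [_ xl].
case: (Hl x xl) => [[f [If ->]]|[g [Jg ->]]].
  exact: N_kill_gen.
exact: N_kill_geny.
Qed.

Lemma N_std P : (forall m, m \in msupp P -> stdm w1 F (xpart m) /\ stdm w2 G (ypart m)) ->
  LT NT P = P.
Proof.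
move=> H; rewrite {2}(mpolyE P) /LT; apply: eq_big_seq => m mP; congr (_ *: _).
have [sx sy] := H m mP.
rewrite /NT NFx_std // NFy_std // incl_xX incl_yX -mpolyXD -split_mon //.
Qed.

Lemma S2 P : sum_ideal I J P ->
  (forall m, m \in msupp P -> stdm w1 F (xpart m) /\ stdm w2 G (ypart m)) -> P = 0.
Proof. by move=> HP Hs; rewrite -(N_std Hs) N_sum_ideal. Qed.

End S2.

Section ToricBasics.
Variables (K : fieldType) (r s : nat) (Q : {set 'I_r * 'I_s}).
Local Notation N := #|Q|.

Definition Zof (q : 'I_r * 'I_s) : 'X_{1..N} :=
  if [pick i : 'I_N | zpair Q i == q] is Some i then U_(i)%MM else 0%MM.

Lemma zpair_inj : injective (zpair Q).
Proof. exact: enum_val_inj. Qed.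

Lemma zpairP i : zpair Q i \in Q.
Proof. exact: enum_valP. Qed.

Lemma zpair_onto q : q \in Q -> exists i, zpair Q i = q.
Proof. by move=> qQ; exists (enum_rank_in qQ q); rewrite /zpair enum_rankK_in. Qed.

Lemma Zof_zpair i : Zof (zpair Q i) = U_(i)%MM.
Proof.
rewrite /Zof; case: pickP => [i' /eqP /zpair_inj -> //|].
by move=> /(_ i); rewrite eqxx.
Qed.

Lemma zvar_zpair i : zvar (K := K) Q (zpair Q i).1 (zpair Q i).2 = 'X_i.
Proof.
rewrite /zvar -surjective_pairing; case: pickP => [i' /eqP /zpair_inj -> //|].
by move=> /(_ i); rewrite eqxx.
Qed.

Lemma zvarX j k : (j, k) \in Q -> zvar (K := K) Q j k = 'X_[Zof (j, k)].
Proof. by move=> /zpair_onto [i E]; rewrite -E Zof_zpair -zvar_zpair E. Qed.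

Definition Emap (u : 'X_{1..N}) : 'X_{1..r + s} :=
  (\sum_(i < N) (U_(lshift s (zpair Q i).1) + U_(rshift r (zpair Q i).2)) *+ u i)%MM.

Lemma EmapD u1 u2 : Emap (u1 + u2)%MM = (Emap u1 + Emap u2)%MM.
Proof.
rewrite /Emap; apply/mnmP => l; rewrite mnmDE !mnm_sumE -big_split /=.
by apply: eq_bigr => i _; rewrite !mulmnE !mnmDE mulnDr.
Qed.

Lemma Emap0 : Emap 0%MM = 0%MM.
Proof. by apply/mnmP => l; rewrite /Emap mnm_sumE mnm0E big1 // => i _; rewrite mulmnE mnm0E muln0. Qed.

Lemma Emap_sum (T : Type) (l : seq T) (P : pred T) (G : T -> 'X_{1..N}) :
  Emap (\big[+%MM/0%MM]_(x <- l | P x) G x) = (\big[+%MM/0%MM]_(x <- l | P x) Emap (G x))%MM.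
Proof.
elim: l => [|x l IH]; first by rewrite !big_nil Emap0.
by rewrite !big_cons; case: (P x); rewrite ?EmapD IH.
Qed.

Lemma xpart_Emap u j : xpart (Emap u) j = (\sum_(i < N | (zpair Q i).1 == j) u i)%N.
Proof.
rewrite xpartE /Emap mnm_sumE [RHS]big_mkcond /=; apply: eq_bigr => i _.
rewrite mulmnE mnmDE !mnm1E eq_rlshift addn0 (inj_eq (@lshift_inj _ _)).
by case: eqP; rewrite ?mul1n ?mul0n.
Qed.

Lemma ypart_Emap u k : ypart (Emap u) k = (\sum_(i < N | (zpair Q i).2 == k) u i)%N.
Proof.
rewrite ypartE /Emap mnm_sumE [RHS]big_mkcond /=; apply: eq_bigr => i _.
rewrite mulmnE mnmDE !mnm1E eq_lrshift add0n (inj_eq (@rshift_inj _ _)).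
by case: eqP; rewrite ?mul1n ?mul0n.
Qed.

Lemma phiQX u : phiQ (K := K) Q 'X_[u] = 'X_[Emap u].
Proof.
rewrite /phiQ comp_mpolyX /Emap -mprodXnE; apply: eq_bigr => i _.
by rewrite tnth_mktuple /xvar /yvar -mpolyXD.
Qed.

Lemma phiQE p : phiQ Q p = \sum_(m <- msupp p) p@_m *: 'X_[Emap m] :> {mpoly K[r + s]}.
Proof. by rewrite /phiQ comp_mpolyEX; apply: eq_bigr => m _; rewrite -/(phiQ Q _) phiQX. Qed.

Lemma phiQ_add : additive (phiQ (K := K) Q).
Proof. by move=> p q; rewrite /phiQ raddfB. Qed.

Lemma phiQD p q : phiQ (K := K) Q (p + q) = phiQ Q p + phiQ Q q.
Proof. by rewrite /phiQ raddfD. Qed.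
Lemma phiQM p q : phiQ (K := K) Q (p * q) = phiQ Q p * phiQ Q q.
Proof. by rewrite /phiQ rmorphM. Qed.
Lemma phiQZ c p : phiQ (K := K) Q (c *: p) = c *: phiQ Q p.
Proof. by rewrite /phiQ linearZ. Qed.
Lemma phiQ0 : phiQ (K := K) Q 0 = 0.
Proof. by rewrite /phiQ raddf0. Qed.
Lemma phiQB p q : phiQ (K := K) Q (p - q) = phiQ Q p - phiQ Q q.
Proof. by rewrite /phiQ raddfB. Qed.

End ToricBasics.

Section Side.
Variables (K : fieldType) (R : realFieldType) (r s : nat) (Q : {set 'I_r * 'I_s}).
Local Notation N := #|Q|.
Variables (n p : nat) (pa : 'I_r * 'I_s -> 'I_n) (pb : 'I_r * 'I_s -> 'I_p)
  (pr : 'I_n -> 'I_p -> 'I_r * 'I_s).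
Hypotheses (Hpa : forall j k, pa (pr j k) = j) (Hpb : forall j k, pb (pr j k) = k)
  (Hpr : forall q, pr (pa q) (pb q) = q).
Variables (adj : 'I_n -> 'I_p -> bool) (zv : 'I_n -> 'I_p -> {mpoly K[N]}).
Hypotheses (Hadj : forall j k, adj j k = (pr j k \in Q))
  (Hzv : forall j k, zv j k = zvar Q (pr j k).1 (pr j k).2).

Definition sA (u : 'X_{1..N}) : 'X_{1..n} :=
  [multinom (\sum_(i < N | pa (zpair Q i) == j) u i)%N | j < n].
Definition sB (u : 'X_{1..N}) : 'X_{1..p} :=
  [multinom (\sum_(i < N | pb (zpair Q i) == k) u i)%N | k < p].
Definition cnt (q : nat) (t : seq 'I_q) : 'X_{1..q} := [multinom count_mem j t | j < q].
Definition Zs (t : seq 'I_n) (k : seq 'I_p) : 'X_{1..N} :=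
  (\sum_(x <- zip t k) Zof Q (pr x.1 x.2))%MM.

Lemma sAD u1 u2 : sA (u1 + u2)%MM = (sA u1 + sA u2)%MM.
Proof. by apply/mnmP => j; rewrite mnmDE !mnmE -big_split; apply: eq_bigr => i _; rewrite mnmDE. Qed.
Lemma sBD u1 u2 : sB (u1 + u2)%MM = (sB u1 + sB u2)%MM.
Proof. by apply/mnmP => j; rewrite mnmDE !mnmE -big_split; apply: eq_bigr => i _; rewrite mnmDE. Qed.
Lemma sA0 : sA 0%MM = 0%MM.
Proof. by apply/mnmP => j; rewrite !mnmE big1 // => i _; rewrite mnm0E. Qed.
Lemma sB0 : sB 0%MM = 0%MM.
Proof. by apply/mnmP => j; rewrite !mnmE big1 // => i _; rewrite mnm0E. Qed.

Lemma sAU i : sA U_(i)%MM = U_(pa (zpair Q i))%MM.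
Proof.
apply/mnmP => j; rewrite !mnmE big_mkcond (bigD1 i) //= big1 ?addn0.
  by rewrite mnm1E eqxx; case: eqP.
by move=> i' ne; rewrite mnm1E [i == _]eq_sym (negbTE ne) if_same.
Qed.

Lemma sBU i : sB U_(i)%MM = U_(pb (zpair Q i))%MM.
Proof.
apply/mnmP => j; rewrite !mnmE big_mkcond (bigD1 i) //= big1 ?addn0.
  by rewrite mnm1E eqxx; case: eqP.
by move=> i' ne; rewrite mnm1E [i == _]eq_sym (negbTE ne) if_same.
Qed.

Lemma Zof_pr j k : adj j k -> exists2 i, zpair Q i = pr j k & Zof Q (pr j k) = U_(i)%MM.
Proof.
rewrite Hadj => /zpair_onto [i E]; exists i => //; by rewrite -E Zof_zpair.
Qed.

Lemma cnt_cons q (x : 'I_q) t : cnt (x :: t) = (U_(x) + cnt t)%MM.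
Proof. by apply/mnmP => j; rewrite mnmDE mnm1E !mnmE /= eq_sym. Qed.

Lemma cnt_nil q : cnt (@nil 'I_q) = 0%MM.
Proof. by apply/mnmP => j; rewrite !mnmE. Qed.

Lemma Zs_cons j t k ks : Zs (j :: t) (k :: ks) = (Zof Q (pr j k) + Zs t ks)%MM.
Proof. by rewrite /Zs /= big_cons. Qed.

Lemma sA_Zs t k : all2 adj t k -> sA (Zs t k) = cnt t.
Proof.
elim: t k => [|j t IH] [|k ks] //=; first by rewrite /Zs big_nil sA0 cnt_nil.
move=> /andP [a h]; rewrite Zs_cons sAD IH // cnt_cons.
by have [i E ->] := Zof_pr a; rewrite sAU E Hpa.
Qed.

Lemma sB_Zs t k : all2 adj t k -> sB (Zs t k) = cnt k.
Proof.
elim: t k => [|j t IH] [|k ks] //=; first by rewrite /Zs big_nil sB0 cnt_nil.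
move=> /andP [a h]; rewrite Zs_cons sBD IH // cnt_cons.
by have [i E ->] := Zof_pr a; rewrite sBU E Hpb.
Qed.

Lemma mdeg_Zs t k : all2 adj t k -> mdeg (Zs t k) = size t.
Proof.
elim: t k => [|j t IH] [|k ks] //=; first by rewrite /Zs big_nil mdeg0.
move=> /andP [a h]; rewrite Zs_cons mdegD IH //.
by have [i E ->] := Zof_pr a; rewrite mdeg1.
Qed.

Lemma prod_zv t k : all2 adj t k -> \prod_(x <- zip t k) zv x.1 x.2 = 'X_[Zs t k].
Proof.
elim: t k => [|j t IH] [|k ks] //=; first by rewrite big_nil /Zs big_nil mpolyX0.
move=> /andP [a h]; rewrite big_cons IH // Zs_cons mpolyXD /=; congr (_ * _).
rewrite Hzv zvarX -?surjective_pairing //; by rewrite -Hadj.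
Qed.

Lemma repr_cnt q (m : 'X_{1..q}) t : repr_mono m t -> m = cnt t.
Proof. by move=> H; apply/mnmP => j; rewrite H mnmE. Qed.

Lemma mdeg_cnt q (t : seq 'I_q) : mdeg (cnt t) = size t.
Proof. elim: t => [|x t IH]; by rewrite ?cnt_nil ?mdeg0 // cnt_cons mdegD mdeg1 IH. Qed.

Lemma decomp t u : (forall j, count_mem j t <= sA u j)%N ->
  exists k, all2 adj t k /\ (Zs t k <= u)%MM.
Proof.
elim: t u => [|j t IH] u H.
  by exists [::]; split => //; rewrite /Zs big_nil; apply/mnm_lepP => i; rewrite mnm0E.
have : (0 < sA u j)%N by apply: leq_trans (H j); rewrite /= eqxx.
rewrite mnmE => /lt0n_neq0 /negP; rewrite sum_nat_eq0 => /negP /forall_inPn [i /eqP Ei ui].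
have ui1 : (U_(i) <= u)%MM by rewrite lep1mP.
set u' := (u - U_(i))%MM.
have Eu : u = (U_(i) + u')%MM by rewrite addmC submK.
have [k [ak le]] : exists k, all2 adj t k /\ (Zs t k <= u')%MM.
  apply: IH => j'; have := H j'; rewrite Eu sAD mnmDE sAU mnm1E Ei /= eq_sym.
  by case: (j' == j); rewrite ?add1n ?ltnS ?add0n.
exists (pb (zpair Q i) :: k); split.
  by rewrite /= ak andbT Hadj -Ei Hpr zpairP.
rewrite Zs_cons -Ei Hpr Zof_zpair Eu; apply/mnm_lepP => l; rewrite !mnmDE leq_add2l.
by move/mnm_lepP: le.
Qed.

Variables (wa : 'I_n -> R) (wb : 'I_p -> R) (om : 'I_N -> R) (eps : R) (w : 'I_N -> R).
Hypothesis Hom : forall i, om i = wa (pa (zpair Q i)) + wb (pb (zpair Q i)) + eps * w i.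

Lemma wt_sA (v : 'I_n -> R) u : wt v (sA u) = \sum_(i < N) v (pa (zpair Q i)) * (u i)%:R.
Proof.
rewrite /Defs.mweight (partition_big (fun i => pa (zpair Q i)) predT) //=.
apply: eq_bigr => j _; rewrite mnmE natr_sum mulr_sumr; apply: eq_bigr => i /eqP <-.
by [].
Qed.

Lemma wt_sB (v : 'I_p -> R) u : wt v (sB u) = \sum_(i < N) v (pb (zpair Q i)) * (u i)%:R.
Proof.
rewrite /Defs.mweight (partition_big (fun i => pb (zpair Q i)) predT) //=.
apply: eq_bigr => j _; rewrite mnmE natr_sum mulr_sumr; apply: eq_bigr => i /eqP <-.
by [].
Qed.

Lemma wt_om u : wt om u = wt wa (sA u) + wt wb (sB u) + eps * wt w u.
Proof.
rewrite wt_sA wt_sB /Defs.mweight mulr_sumr -!big_split /=; apply: eq_bigr => i _.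
by rewrite Hom !mulrDl mulrA.
Qed.

Lemma lift_elemE (f : {mpoly K[n]}) ord k :
  (forall m, m \in msupp f -> all2 adj (ord m) k) ->
  lift_elem zv f ord k = \sum_(m <- msupp f) f@_m *: 'X_[Zs (ord m) k].
Proof. by move=> H; apply: eq_big_seq => m mf; rewrite prod_zv // H. Qed.

Lemma lift_supp (f : {mpoly K[n]}) ord k v :
  (forall m, m \in msupp f -> all2 adj (ord m) k) ->
  v \in msupp (lift_elem zv f ord k) -> exists2 m, m \in msupp f & v = Zs (ord m) k.
Proof.
move=> H; rewrite lift_elemE // => /msupp_sum_le /flattenP [t /mapP [m mf ->]].
by move/msuppZ_le; rewrite msuppX inE => /eqP ->; exists m; rewrite // filter_predT in mf.
Qed.

Lemma lift_coef (f : {mpoly K[n]}) ord k m0 :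
  (forall m, m \in msupp f -> all2 adj (ord m) k /\ repr_mono m (ord m)) ->
  m0 \in msupp f ->
  (lift_elem zv f ord k)@_(Zs (ord m0) k) = f@_m0.
Proof.
move=> H m0f; rewrite lift_elemE; last by move=> m /H [].
rewrite [in RHS](mpolyE f) !raddf_sum /=; apply: eq_big_seq => m mf.
rewrite !mcoeffZ !mcoeffX.
have -> : (Zs (ord m) k == Zs (ord m0) k) = (m == m0) => //.
have [a1 r1] := H m mf; have [a2 r2] := H m0 m0f.
apply/eqP/eqP => [E|->//]; rewrite (repr_cnt r1) (repr_cnt r2).
by rewrite -(sA_Zs a1) -(sA_Zs a2) E.
Qed.

Lemma eps_arith (e gap X : R) : 0 < e -> 0 <= X -> e <= gap / (X + 1) -> e * X < gap.
Proof.
move=> e0 X0; have h : 0 < X + 1 by rewrite ltr_wpDl.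
rewrite ler_pdivlMr // mulrDr mulr1 => H.
by apply: lt_le_trans H; rewrite ltrDl.
Qed.

Lemma side_reduce (f : {mpoly K[n]}) ord m0 u :
  weakly_Q_homog adj wa f -> valid_order adj wa f ord ->
  (forall m m', m \in msupp f -> m' \in msupp f -> wt wa m < wt wa m' ->
     eps <= (wt wa m' - wt wa m) / ((mdeg m')%:R *+ 2 * \sum_i `|w i| + 1)) ->
  0 < eps -> lead_mono wa f m0 -> (forall j, m0 j <= sA u j)%N ->
  exists k, [/\ Lift adj zv wa f ord (lift_elem zv f ord k),
     (Zs (ord m0) k <= u)%MM, (lift_elem zv f ord k)@_(Zs (ord m0) k) != 0 &
     forall v, v \in msupp (lift_elem zv f ord k) -> v != Zs (ord m0) k ->
       wt om v < wt om (Zs (ord m0) k) /\ mdeg v = mdeg (Zs (ord m0) k)].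
Proof.
move=> [d [m0' [hom [L' _]]]] vo epsf e0 L le.
have E := lead_uniq L L'; subst m0'.
have [reprs adjall] := vo m0 L.
have r0 := reprs m0 (proj1 L).
have [k [ak Zle]] : exists k, all2 adj (ord m0) k /\ (Zs (ord m0) k <= u)%MM.
  by apply: decomp => j; rewrite -r0.
have adjm := adjall k ak.
exists k; split => //.
- by exists m0, k.
- by rewrite lift_coef ?(lead_coef_neq0 L) ?(proj1 L) // => m mf; split; [apply: adjm | apply: reprs].
move=> v /(lift_supp adjm) [m mf ->] ne.
have mn : m != m0 by apply: contraNneq ne => ->.
have dm : forall m1, m1 \in msupp f -> mdeg (Zs (ord m1) k) = d.
  move=> m1 m1f; rewrite mdeg_Zs ?adjm // -mdeg_cnt -(repr_cnt (reprs _ m1f)).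
  by rewrite (dhomog_mf hom m1f).
split; last by rewrite !dm // (proj1 L).
rewrite !wt_om !sA_Zs ?adjm ?(proj1 L) // !sB_Zs ?adjm ?(proj1 L) //.
rewrite -(repr_cnt (reprs _ mf)) -(repr_cnt r0).
set Xm := wt w (Zs (ord m) k); set X0 := wt w (Zs (ord m0) k).
have gap : wt wa m < wt wa m0 by apply: (proj2 L).
have := epsf m m0 mf (proj1 L) gap; rewrite (dhomog_mf hom (proj1 L)) => epsle.
have Xb : `|Xm - X0| <= (d%:R *+ 2 * \sum_i `|w i|).
  apply: le_trans (ler_normB _ _) _; rewrite mulrnAl mulr2n.
  apply: lerD; (apply: le_trans (wt_bound _ _) _; rewrite dm ?(proj1 L) //).
have Hlt := eps_arith e0 (le_trans (normr_ge0 _) Xb) epsle.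
have H2 : eps * (Xm - X0) <= eps * (d%:R *+ 2 * \sum_i `|w i|).
  apply: ler_wpM2l; first exact: ltW.
  exact: le_trans (ler_norm _) Xb.
move: H2 Hlt; set Y := eps * (_ * _); move: Y => Y; rewrite mulrBr; lra.
Qed.

End Side.

Section Main.
Variables (K : fieldType) (R : realFieldType) (r s : nat) (Q : {set 'I_r * 'I_s}).
Variables (I : {mpoly K[r]} -> Prop) (J : {mpoly K[s]} -> Prop).
Variables (w1 : 'I_r -> R) (w2 : 'I_s -> R) (F : seq {mpoly K[r]}) (G : seq {mpoly K[s]}).
Variables (w : 'I_#|Q| -> R) (ordF : {mpoly K[r]} -> 'X_{1..r} -> seq 'I_r)
  (ordG : {mpoly K[s]} -> 'X_{1..s} -> seq 'I_s).
Hypotheses (homI : homog_ideal I) (homJ : homog_ideal J).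
Hypotheses (GBI : groebner_basis w1 (fun f => f \in F) I)
  (GBJ : groebner_basis w2 (fun g => g \in G) J).
Hypotheses (wqF : forall f, f \in F -> weakly_Q_homog (adjx Q) w1 f)
  (wqG : forall g, g \in G -> weakly_Q_homog (adjy Q) w2 g).
Hypothesis GBQ : groebner_basis w (HQ (K := K) Q) (IQ (K := K) Q).
Hypotheses (voF : forall f, f \in F -> valid_order (adjx Q) w1 f (ordF f))
  (voG : forall g, g \in G -> valid_order (adjy Q) w2 g (ordG g)).
Variable eps : R.
Hypothesis eps_pos : 0 < eps.
Local Notation B := (\sum_i `|w i|).
Hypothesis epsF : forall f, f \in F -> forall m m', m \in msupp f -> m' \in msupp f ->
  wt w1 m < wt w1 m' -> eps <= (wt w1 m' - wt w1 m) / ((mdeg m')%:R *+ 2 * B + 1).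
Hypothesis epsG : forall f, f \in G -> forall m m', m \in msupp f -> m' \in msupp f ->
  wt w2 m < wt w2 m' -> eps <= (wt w2 m' - wt w2 m) / ((mdeg m')%:R *+ 2 * B + 1).

Local Notation N := #|Q|.
Local Notation om := (omega' Q w1 w2 eps w).
Local Notation L' := (fiber_prod (K := K) Q I J).

Definition Gen (h : {mpoly K[N]}) : Prop :=
  (exists f, f \in F /\ Lift (adjx Q) (zvar (K := K) Q) w1 f (ordF f) h)
  \/ (exists g, g \in G /\ Lift (adjy Q) (zvar_y (K := K) Q) w2 g (ordG g) h)
  \/ HQ Q h.

Lemma Iid : exists S, forall p, I p <-> ideal_gen S p.
Proof. by case: homI => S [_ H]; exists S. Qed.
Lemma Jid : exists S, forall p, J p <-> ideal_gen S p.
Proof. by case: homJ => S [_ H]; exists S. Qed.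

Lemma Flead f : f \in F -> exists d m0, f \is d.-homog /\ lead_mono w1 f m0.
Proof. by move=> /wqF [d [m0 [h [L _]]]]; exists d, m0. Qed.
Lemma Glead f : f \in G -> exists d m0, f \is d.-homog /\ lead_mono w2 f m0.
Proof. by move=> /wqG [d [m0 [h [L _]]]]; exists d, m0. Qed.

Let pax (q : 'I_r * 'I_s) := q.1.
Let pbx (q : 'I_r * 'I_s) := q.2.
Let prx (j : 'I_r) (k : 'I_s) := (j, k).
Let pay (q : 'I_r * 'I_s) := q.2.
Let pby (q : 'I_r * 'I_s) := q.1.
Let pry (k : 'I_s) (j : 'I_r) := (j, k).

Lemma Homx i : om i = w1 (pax (zpair Q i)) + w2 (pbx (zpair Q i)) + eps * w i.
Proof. by []. Qed.
Lemma Homy i : om i = w2 (pay (zpair Q i)) + w1 (pby (zpair Q i)) + eps * w i.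
Proof. by rewrite /omega' [w1 _ + _]addrC. Qed.

Lemma sAx (u : 'X_{1..N}) : sA pax u = xpart (Emap u).
Proof. by apply/mnmP => j; rewrite mnmE xpart_Emap. Qed.
Lemma sBx (u : 'X_{1..N}) : sB pbx u = ypart (Emap u).
Proof. by apply/mnmP => j; rewrite mnmE ypart_Emap. Qed.
Lemma sAy (u : 'X_{1..N}) : sA pay u = ypart (Emap u).
Proof. by apply/mnmP => j; rewrite mnmE ypart_Emap. Qed.
Lemma sBy (u : 'X_{1..N}) : sB pby u = xpart (Emap u).
Proof. by apply/mnmP => j; rewrite mnmE xpart_Emap. Qed.

Lemma wt_omE (u : 'X_{1..N}) : wt om u = wt w1 (xpart (Emap u)) + wt w2 (ypart (Emap u)) + eps * wt w u.
Proof. by rewrite (wt_om Homx) sAx sBx. Qed.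


Let Hpax : forall j k, pax (prx j k) = j. Proof. by []. Qed.
Let Hpbx : forall j k, pbx (prx j k) = k. Proof. by []. Qed.
Let Hprx : forall q, prx (pax q) (pbx q) = q. Proof. by case. Qed.
Let Hadjx : forall j k, adjx Q j k = (prx j k \in Q). Proof. by []. Qed.
Let Hzvx : forall j k, zvar (K := K) Q j k = zvar Q (prx j k).1 (prx j k).2. Proof. by []. Qed.
Let Hpay : forall j k, pay (pry j k) = j. Proof. by []. Qed.
Let Hpby : forall j k, pby (pry j k) = k. Proof. by []. Qed.
Let Hpry : forall q, pry (pay q) (pby q) = q. Proof. by case. Qed.
Let Hadjy : forall j k, adjy Q j k = (pry j k \in Q). Proof. by []. Qed.
Let Hzvy : forall j k, zvar_y (K := K) Q j k = zvar Q (pry j k).1 (pry j k).2. Proof. by []. Qed.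

Lemma phiQ_lift_x f k : (forall m, m \in msupp f -> all2 (adjx Q) (ordF f m) k /\ repr_mono m (ordF f m)) ->
  phiQ Q (lift_elem (zvar (K := K) Q) f (ordF f) k) = incl_x s f * 'X_[emby r (cnt k)].
Proof.
move=> H.
rewrite (lift_elemE Hadjx Hzvx); last by move=> m /H [].
rewrite incl_xE mulr_suml /phiQ linear_sum; apply: eq_big_seq => m mf.
rewrite linearZ /= -/(phiQ Q _) phiQX -scalerAl -mpolyXD; congr (_ *: 'X_[_]).
have [a rp] := H m mf.
by rewrite [LHS]split_mon -sAx -sBx (sA_Zs Hpax Hadjx a) (sB_Zs Hpbx Hadjx a) -(repr_cnt rp).
Qed.

Lemma phiQ_lift_y f k : (forall m, m \in msupp f -> all2 (adjy Q) (ordG f m) k /\ repr_mono m (ordG f m)) ->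
  phiQ Q (lift_elem (zvar_y (K := K) Q) f (ordG f) k) = incl_y r f * 'X_[embx s (cnt k)].
Proof.
move=> H.
rewrite (lift_elemE Hadjy Hzvy); last by move=> m /H [].
rewrite incl_yE mulr_suml /phiQ linear_sum; apply: eq_big_seq => m mf.
rewrite linearZ /= -/(phiQ Q _) phiQX -scalerAl -mpolyXD; congr (_ *: 'X_[_]).
have [a rp] := H m mf.
by rewrite [LHS]split_mon -sAy -sBy (sA_Zs Hpay Hadjy a) (sB_Zs Hpby Hadjy a) -(repr_cnt rp) addmC.
Qed.

Lemma Gen_L h : Gen h -> L' h.
Proof.
case=> [[f [fF [m0 [k [L [ak ->]]]]]]|[[g [gG [m0 [k [L [ak ->]]]]]]|hH]].
- have [reprs adjall] := voF fF L.
  rewrite /fiber_prod phiQ_lift_x; last by move=> m mf; split; [apply: adjall | apply: reprs].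
  rewrite mulrC; apply: igM; apply: ig_in; left; exists f; split => //.
  by case: GBI => H _; apply: H.
- have [reprs adjall] := voG gG L.
  rewrite /fiber_prod phiQ_lift_y; last by move=> m mf; split; [apply: adjall | apply: reprs].
  rewrite mulrC; apply: igM; apply: ig_in; right; exists g; split => //.
  by case: GBJ => H _; apply: H.
- have : IQ Q h by case: GBQ => H _; apply: H.
  by rewrite /IQ /fiber_prod => ->; apply: ig0.
Qed.

Lemma LD p q : L' p -> L' q -> L' (p + q).
Proof. by rewrite /fiber_prod phiQD; apply: igD. Qed.
Lemma LM a p : L' p -> L' (a * p).
Proof. by rewrite /fiber_prod phiQM; apply: igM. Qed.
Lemma LZ c p : L' p -> L' (c *: p).
Proof. by rewrite /fiber_prod phiQZ; apply: igZ. Qed.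
Lemma LB p q : L' p -> L' q -> L' (p - q).
Proof. by rewrite /fiber_prod phiQB; apply: igB. Qed.
Lemma L_sum (T : eqType) (l : seq T) (P : pred T) (Fn : T -> {mpoly K[N]}) :
  (forall x, x \in l -> P x -> L' (Fn x)) -> L' (\sum_(x <- l | P x) Fn x).
Proof.
elim: l => [|x l IH] H; first by rewrite big_nil /fiber_prod phiQ0; apply: ig0.
rewrite big_cons; case: ifP => Px.
  by apply: LD; [apply: H; rewrite ?mem_head | apply: IH => y yl; apply: H; rewrite inE yl orbT].
by apply: IH => y yl; apply: H; rewrite inE yl orbT.
Qed.

Definition stdE (m : 'X_{1..N}) :=
  stdm w1 F (xpart (Emap m)) /\ stdm w2 G (ypart (Emap m)).

Definition Rep (p : {mpoly K[N]}) (W : R) :=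
  exists (l : seq (K * 'X_{1..N} * {mpoly K[N]})) (r0 : {mpoly K[N]}),
  [/\ forall x, x \in l -> Gen x.2,
      forall x, x \in l -> forall m, m \in msupp ('X_[x.1.2] * x.2) -> wt om m <= W,
      forall m, m \in msupp r0 -> wt om m <= W /\ stdE m &
      p = \sum_(x <- l) x.1.1 *: ('X_[x.1.2] * x.2) + r0].

Lemma RepD p q W : Rep p W -> Rep q W -> Rep (p + q) W.
Proof.
move=> [l1 [r1 [G1 W1 S1 ->]]] [l2 [r2 [G2 W2 S2 ->]]].
exists (l1 ++ l2), (r1 + r2); split.
- by move=> x; rewrite mem_cat => /orP [/G1|/G2].
- by move=> x; rewrite mem_cat => /orP [/W1|/W2].
- by move=> m /msuppD_le; rewrite mem_cat => /orP [/S1|/S2].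
- by rewrite big_cat addrACA.
Qed.

Lemma RepZ c p W : Rep p W -> Rep (c *: p) W.
Proof.
move=> [l [r0 [G1 W1 S1 ->]]].
exists [seq (c * x.1.1, x.1.2, x.2) | x <- l], (c *: r0); split.
- by move=> x /mapP [y yl ->]; exact: (G1 y yl).
- by move=> x /mapP [y yl ->]; exact: (W1 y yl).
- by move=> m /msuppZ_le /S1.
- by rewrite scalerDr big_map scaler_sumr; congr (_ + _); apply: eq_bigr => x _; rewrite scalerA.
Qed.

Lemma Rep0 W : Rep 0 W.
Proof. by exists [::], 0; split => //; rewrite ?msupp0 ?big_nil ?addr0. Qed.

Lemma Rep_le p W W' : W <= W' -> Rep p W -> Rep p W'.
Proof.
move=> le [l [r0 [G1 W1 S1 E]]]; exists l, r0; split => //.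
- by move=> x xl m mx; apply: le_trans le; apply: W1 xl m mx.
- by move=> m /S1 [h st]; split => //; apply: le_trans le.
Qed.

Lemma Rep_sum W (T : eqType) (l : seq T) (P : pred T) (Fn : T -> {mpoly K[N]}) :
  (forall x, x \in l -> P x -> Rep (Fn x) W) -> Rep (\sum_(x <- l | P x) Fn x) W.
Proof.
elim: l => [|x l IH] H; first by rewrite big_nil; apply: Rep0.
rewrite big_cons; case: ifP => Px.
  by apply: RepD; [apply: H; rewrite ?mem_head | apply: IH => y yl; apply: H; rewrite inE yl orbT].
by apply: IH => y yl; apply: H; rewrite inE yl orbT.
Qed.

Lemma red_step u g Z0 : Gen g -> (Z0 <= u)%MM -> g@_Z0 != 0 ->
  (forall v, v \in msupp g -> v != Z0 -> wt om v < wt om Z0 /\ mdeg v = mdeg Z0) ->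
  (forall v, mdeg v = mdeg u -> wt om v < wt om u -> Rep 'X_[v] (wt om v)) ->
  Rep 'X_[u] (wt om u).
Proof.
move=> Gg le cn Hv IH.
set c := g@_Z0; set u' := (u - Z0)%MM.
have Eu' : u = (u' + Z0)%MM by rewrite submK.
have Eu : 'X_[u] = c^-1 *: ('X_[u'] * g) - c^-1 *: ('X_[u'] * (g - c *: 'X_[Z0])).
  rewrite -scalerBr -mulrBr opprB addrC subrK -scalerAr -mpolyXD -Eu'.
  by rewrite scalerA mulVf // scale1r.
rewrite Eu; apply: RepD.
  exists [:: (c^-1, u', g)], 0; split.
  - by move=> x; rewrite inE => /eqP ->.
  - move=> x; rewrite inE => /eqP -> m /= /msuppMX_sub [v vg ->].
    rewrite [in X in _ <= X]Eu' !mweightD lerD2l.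
    by case: (altP (v =P Z0)) => [->//|ne]; apply: ltW; case: (Hv v vg ne).
  - by move=> m; rewrite msupp0.
  - by rewrite big_seq1 addr0.
rewrite -scaleNr; apply: RepZ; rewrite mulX_supp_expand; apply: Rep_sum => v vr _.
apply: RepZ; have [vg vn] := rest_supp vr; have [lt dv] := Hv v vg vn.
have lt' : wt om (u' + v)%MM < wt om u by rewrite [in X in _ < X]Eu' !mweightD ltrD2l.
apply: Rep_le (ltW lt') _; apply: IH lt'.
by rewrite Eu' !mdegD dv.
Qed.

Lemma Rep_mono u : Rep 'X_[u] (wt om u).
Proof.
elim/(@wt_ind _ _ om): u => u IH.
case: (classic (stdE u)) => [su|nsu].
  exists [::], 'X_[u]; split => //; last by rewrite big_nil add0r.
  by move=> m; rewrite msuppX inE => /eqP ->.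
have [nx|ny] : ~ stdm w1 F (xpart (Emap u)) \/ ~ stdm w2 G (ypart (Emap u)).
  by apply: NNPP => H; apply: nsu; split; apply: NNPP => h; apply: H; [left|right].
- have [f [m0 [fF [L le]]]] : exists f m0, f \in F /\ lead_mono w1 f m0 /\ (m0 <= xpart (Emap u))%MM.
    apply: NNPP => H; apply: nx => f m0 fF L le; apply: H; by exists f, m0.
  have le' : forall j, (m0 j <= sA pax u j)%N by move=> j; rewrite sAx; move/mnm_lepP: le.
  have [k [Lk Zle cn Hv]] := side_reduce Hpax Hpbx Hprx Hadjx Hzvx Homx (wqF fF) (voF fF) (epsF fF) eps_pos L le'.
  by apply: (red_step _ Zle cn Hv IH); left; exists f; split.
- have [f [m0 [fF [L le]]]] : exists f m0, f \in G /\ lead_mono w2 f m0 /\ (m0 <= ypart (Emap u))%MM.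
    apply: NNPP => H; apply: ny => f m0 fF L le; apply: H; by exists f, m0.
  have le' : forall j, (m0 j <= sA pay u j)%N by move=> j; rewrite sAy; move/mnm_lepP: le.
  have [k [Lk Zle cn Hv]] := side_reduce Hpay Hpby Hpry Hadjy Hzvy Homy (wqG fF) (voG fF) (epsG fF) eps_pos L le'.
  by apply: (red_step _ Zle cn Hv IH); right; left; exists f; split.
Qed.

Lemma Rep_all p W : (forall m, m \in msupp p -> wt om m <= W) -> Rep p W.
Proof.
move=> H; rewrite (mpolyE p); apply: Rep_sum => m mp _; apply: RepZ.
exact: Rep_le (H m mp) (Rep_mono m).
Qed.

Definition Mgen := ideal_gen (fun q => exists h, Gen h /\ q = in_w om h).

Lemma in_w_class (f : {mpoly K[N]}) e : (forall m, m \in msupp f -> Emap m = e) ->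
  in_w om f = in_w w f.
Proof.
move=> H; apply/mpolyP => m; rewrite !in_w_coef.
case: (boolP (m \in msupp f)) => mf; last by rewrite (memN_msupp_eq0 mf) !if_same.
congr (if _ then _ else _); apply: eq_in_all => m' m'f /=.
by rewrite !wt_omE !H // lerD2l ler_pM2l.
Qed.

Lemma EmapU i : Emap U_(i)%MM = (U_(lshift s (zpair Q i).1) + U_(rshift r (zpair Q i).2))%MM.
Proof.
rewrite /Emap (bigD1 i) //= big1 ?addm0; first by rewrite mnm1E eqxx mulm1n.
by move=> i' ne; rewrite mnm1E eq_sym (negbTE ne) mulm0n.
Qed.

Lemma HQ_class h : HQ (K := K) Q h -> exists e, forall m, m \in msupp h -> Emap m = e.
Proof.
move=> [l [j [k [_ _ _ Hq [_ ->]]]]].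
have EX : forall a b, (j a, k b) \in Q -> zvar (K := K) Q (j a) (k b) = 'X_[Zof Q (j a, k b)] by move=> a b; apply: zvarX.
rewrite (eq_bigr _ (fun a _ => EX a a (proj1 (Hq a)))).
rewrite (eq_bigr (fun a => 'X_[Zof Q (j (ordS a), k a)]) (fun a _ => EX _ a (proj2 (Hq a)))).
rewrite !mprodXE.
set u1 := (\sum_(a < l) _)%MM; set u2 := (\sum_(a < l) _)%MM.
have EZ : forall a b, (j a, k b) \in Q -> Emap (Zof Q (j a, k b)) = (U_(lshift s (j a)) + U_(rshift r (k b)))%MM.
  by move=> a b /zpair_onto [i E]; rewrite -E Zof_zpair EmapU E.
have E12 : Emap u1 = Emap u2.
  rewrite /u1 /u2 !Emap_sum.
  rewrite (eq_bigr _ (fun a _ => EZ a a (proj1 (Hq a)))).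
  rewrite (eq_bigr (fun a => U_(lshift s (j (ordS a))) + U_(rshift r (k a)))%MM (fun a _ => EZ _ a (proj2 (Hq a)))).
  rewrite !big_split /=; congr (_ + _)%MM.
  by rewrite (reindex_inj (@ordS_inj l)).
exists (Emap u1) => m /msuppB_le; rewrite mem_cat !msuppX !inE => /orP [/eqP ->//|/eqP ->//].
Qed.

Lemma in_w_HQ h : HQ (K := K) Q h -> in_w om h = in_w w h.
Proof. by move=> /HQ_class [e He]; apply: (in_w_class He). Qed.

Lemma sum_pred1_seq (T : eqType) (V : nmodType) (l : seq T) x (c : V) :
  uniq l -> x \in l -> \sum_(y <- l | x == y) c = c.
Proof.
move=> ul xl; rewrite (big_rem x) //= eqxx big1_seq ?addr0 // => y /andP [/eqP <-].
by rewrite mem_rem_uniqF.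
Qed.

Lemma part_IQ r0 W : IQ Q r0 -> (forall m, m \in msupp r0 -> wt om m <= W) -> Mgen (part om W r0).
Proof.
move=> IQr Hw.
set Es := undup [seq Emap m | m <- msupp r0].
pose re e := \sum_(m <- msupp r0 | Emap m == e) r0@_m *: 'X_[m].
have Ere : r0 = \sum_(e <- Es) re e.
  rewrite /re (exchange_big_dep predT) //= {1}(mpolyE r0); apply: eq_big_seq => m mr.
  by rewrite sum_pred1_seq ?undup_uniq // mem_undup; apply: map_f.
rewrite Ere part_sum; apply: ig_sum => e _ _.
have coef_re : forall m, (re e)@_m = if Emap m == e then r0@_m else 0 by move=> m; exact: coef_filter_sum.
have Ire : IQ Q (re e).
  rewrite /IQ /re /phiQ linear_sum /=.
  rewrite (eq_bigr (fun m => r0@_m *: 'X_[e])); last first.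
    by move=> m /eqP <-; rewrite linearZ /= -/(phiQ Q _) phiQX.
  rewrite -scaler_suml.
  have : (phiQ Q r0)@_e = 0 by rewrite IQr mcoeff0.
  rewrite phiQE raddf_sum /= => H.
  rewrite (_ : \sum_(i <- msupp r0 | Emap i == e) r0@_i = 0) ?scale0r //.
  rewrite -[RHS]H big_mkcond /=; apply: eq_bigr => m _.
  by rewrite mcoeffZ mcoeffX; case: eqP; rewrite ?mulr1 ?mulr0.
set c := wt w1 (xpart e) + wt w2 (ypart e).
set V := (W - c) / eps.
have omE : forall m, Emap m = e -> wt om m = c + eps * wt w m by move=> m Em; rewrite wt_omE Em.
have Epart : part om W (re e) = part w V (re e).
  apply/mpolyP => m; rewrite !part_coef coef_re.
  case: (altP (Emap m =P e)) => [Em|]; last by rewrite !if_same.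
  congr (if _ then _ else _); rewrite omE // /V.
  have en : eps != 0 by rewrite gt_eqF.
  by apply/eqP/eqP => [<-|->]; field.
rewrite Epart.
have Hle : forall m, m \in msupp (re e) -> wt w m <= V.
  move=> m; rewrite mcoeff_msupp coef_re; case: (altP (Emap m =P e)) => [Em|]; last by rewrite eqxx.
  rewrite -mcoeff_msupp => /Hw; rewrite omE // /V => H.
  by rewrite ler_pdivlMr // mulrC lerBrDl.
case: (part_le Hle) => ->; first exact: ig0.
have : init_ideal w (IQ Q) (in_w w (re e)) by apply: ig_in; exists (re e).
move/(proj1 (proj2 GBQ _)); apply: ig_sub => q [g [Hg ->]].
by apply: ig_in; exists g; split; [right; right | rewrite in_w_HQ].
Qed.

Lemma main_in p : L' p -> Mgen (in_w om p).
Proof.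
move=> Lp.
case: (altP (p =P 0)) => [->|pn]; first by rewrite in_w0; apply: ig0.
have [W [_ Hw ->]] := in_w_part om pn.
have [l [r0 [Gl Wl Sr Ep]]] := Rep_all Hw.
have Lr0 : L' r0.
  have -> : r0 = p - \sum_(x <- l) x.1.1 *: ('X_[x.1.2] * x.2) by rewrite Ep [_ + r0]addrC addrK.
  apply: LB => //; apply: L_sum => x xl _; apply: LZ; apply: LM; exact: Gen_L (Gl x xl).
have IQr : IQ Q r0.
  apply: (S2 Iid Jid GBI GBJ Flead Glead Lr0) => m.
  rewrite phiQE => /msupp_sum_le /flattenP [t /mapP [m' m'r ->]] /msuppZ_le.
  rewrite msuppX inE => /eqP ->; rewrite filter_predT in m'r.
  exact: (proj2 (Sr m' m'r)).
rewrite Ep partD part_sum; apply: igD; last first.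
  by apply: part_IQ => // m /Sr [].
apply: ig_sum => x xl _; rewrite partZ; apply: igZ; rewrite part_mulX.
have Hle : forall m, m \in msupp x.2 -> wt om m <= W - wt om x.1.2.
  move=> m mx; rewrite lerBrDl -mweightD; apply: (Wl x xl).
  by rewrite mpoly_mulC (perm_mem (msuppMX _ _)) map_f.
case: (part_le Hle) => ->; first by rewrite mulr0; apply: ig0.
by apply: igM; apply: ig_in; exists x.2; split => //; apply: Gl.
Qed.

Lemma main_gb : groebner_basis om Gen L'.
Proof.
split; first exact: Gen_L.
move=> p; split.
  apply: ig_sub => q [f [Lf ->]]; exact: main_in.
by apply: ig_mono => q [g [Gg ->]]; exists g; split => //; apply: Gen_L.
Qed.

End Main.

Section Eps.
Variables (R : realFieldType).

Lemma foldr_min_pos (l : seq R) : (forall x, x \in l -> 0 < x) -> 0 < foldr Num.min 1 l.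
Proof.
elim: l => [|x l IH] H /=; first exact: ltr01.
have H' : forall y, y \in l -> 0 < y by move=> y yl; apply: H; rewrite inE yl orbT.
by rewrite lt_min H ?mem_head //= IH.
Qed.

Lemma foldr_min_le (l : seq R) x : x \in l -> foldr Num.min 1 l <= x.
Proof.
elim: l => [|y l IH] //=; rewrite inE => /orP [/eqP ->|xl]; first by rewrite ge_min lexx.
by rewrite ge_min IH ?orbT.
Qed.

Definition gapval n (wa : 'I_n -> R) (B : R) (m m' : 'X_{1..n}) :=
  (wt wa m' - wt wa m) / ((mdeg m')%:R *+ 2 * B + 1).

Definition gaplist (K : fieldType) n (wa : 'I_n -> R) (B : R) (F : seq {mpoly K[n]}) : seq R :=
  flatten [seq [seq gapval wa B x.1 x.2 | x <- [seq (m, m') | m <- msupp f, m' <- msupp f]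
             & wt wa x.1 < wt wa x.2] | f <- F].

Lemma gaplist_pos (K : fieldType) n (wa : 'I_n -> R) (B : R) (F : seq {mpoly K[n]}) :
  0 <= B -> forall x, x \in gaplist wa B F -> 0 < x.
Proof.
move=> B0 x /flattenP [l /mapP [f _ ->]] /mapP [[m m'] /=].
rewrite mem_filter /= => /andP [lt _] ->.
rewrite /gapval divr_gt0 ?subr_gt0 //.
by rewrite ltr_wpDl ?ltr01 // mulr_ge0 // mulrn_wge0.
Qed.

Lemma gaplist_mem (K : fieldType) n (wa : 'I_n -> R) (B : R) (F : seq {mpoly K[n]}) f m m' :
  f \in F -> m \in msupp f -> m' \in msupp f -> wt wa m < wt wa m' ->
  gapval wa B m m' \in gaplist wa B F.
Proof.
move=> fF mf m'f lt; apply/flattenP; exists [seq gapval wa B x.1 x.2 | x <- [seq (m, m') | m <- msupp f, m' <- msupp f]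
             & wt wa x.1 < wt wa x.2]; first by apply/mapP; exists f.
apply/mapP; exists (m, m') => //; rewrite mem_filter /= lt /=.
by apply/allpairsP; exists (m, m').
Qed.

End Eps.

Theorem corollary3p8 (K : fieldType) (R : realFieldType) (r s : nat)
  (Q : {set 'I_r * 'I_s})
  (I : {mpoly K[r]} -> Prop) (J : {mpoly K[s]} -> Prop)
  (w1 : 'I_r -> R) (w2 : 'I_s -> R)
  (F : seq {mpoly K[r]}) (G : seq {mpoly K[s]})
  (w : 'I_#|Q| -> R)
  (ordF : {mpoly K[r]} -> 'X_{1..r} -> seq 'I_r)
  (ordG : {mpoly K[s]} -> 'X_{1..s} -> seq 'I_s) :
  homog_ideal I -> homog_ideal J ->
  groebner_basis w1 (fun f => f \in F) I ->
  groebner_basis w2 (fun g => g \in G) J ->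
  (forall f, f \in F -> weakly_Q_homog (adjx Q) w1 f) ->
  (forall g, g \in G -> weakly_Q_homog (adjy Q) w2 g) ->
  groebner_basis w (HQ (K := K) Q) (IQ (K := K) Q) ->
  (* the orderings of the monomials used to define the lifts *)
  (forall f, f \in F -> valid_order (adjx Q) w1 f (ordF f)) ->
  (forall g, g \in G -> valid_order (adjy Q) w2 g (ordG g)) ->
  exists eps : R, 0 < eps /\
    groebner_basis (omega' Q w1 w2 eps w)
      (fun h => (exists f, f \in F /\
                   Lift (adjx Q) (zvar (K := K) Q) w1 f (ordF f) h)
             \/ (exists g, g \in G /\
                   Lift (adjy Q) (zvar_y (K := K) Q) w2 g (ordG g) h)
             \/ HQ Q h)
      (fiber_prod Q I J).
Proof.
move=> homI homJ GBI GBJ wqF wqG GBQ voF voG.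
set B := \sum_i `|w i|.
have B0 : 0 <= B by apply: sumr_ge0 => i _; apply: normr_ge0.
set l := gaplist w1 B F ++ gaplist w2 B G.
set eps := foldr Num.min 1 l.
have eps_pos : 0 < eps.
  apply: foldr_min_pos => x; rewrite mem_cat => /orP [] /gaplist_pos; apply => //.
exists eps; split => //.
apply: (@main_gb K R r s Q I J w1 w2 F G w ordF ordG homI homJ GBI GBJ wqF wqG GBQ voF voG eps eps_pos).
- move=> f fF m m' mf m'f lt; apply: foldr_min_le; rewrite mem_cat.
  by rewrite (gaplist_mem B fF mf m'f lt).
- move=> f fF m m' mf m'f lt; apply: foldr_min_le; rewrite mem_cat.
  by rewrite (gaplist_mem B fF mf m'f lt) orbT.
Qed.
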